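(* Let $H_m$ and $H_n$ be complex Hadamard matrices of orders $m$ and $n$, and let $H=H_m\otimes H_n$ (of order $mn$). Let $R_1$ be the set of the first $n$ rows of $H$ and $R$ the set of the remaining rows. For $1\le i\le n$ let $C_i$ be the set of the $m$ columns of $H$ with indices $i, n+i, 2n+i,\dots,(m-1)n+i$, and let $M_{1i}$ be the submatrix of $H$ with rows $R_1$ and columns $C_i$. Then $\{C_1,\dots,C_n\}$ is a partition of the columns, $\{R,R_1\}$ is a partition of the rows, and for all $i\neq j$ every column of $M_{1i}$ is orthogonal to every column of $M_{1j}$. Consequently, for every $i$ and every $a\in\mathbb{T}$, the matrix obtained from $H$ by replacing $M_{1i}$ with $aM_{1i}$ is a complex Hadamard matrix (so $H$ admits infinitely many such switchings).
   Context: $\mathbb{T}$ is the set of complex numbers of modulus $1$. A complex Hadamard matrix of order $n$ is an $n\times n$ matrix with all entries in $\mathbb{T}$ and $HH^{\ast}=nI_n$. The Kronecker product is $A\otimes B=[a_{ij}B]$, so the first $n$ rows of $H_m\otimes H_n$ consist of the $m$ blocks $(H_m)_{1j}H_n$ placed side by side. *)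

(* Defs.v *)
(* Complex numbers: an arbitrary numClosedFieldType C
   (e.g. the complex numbers); conjugation is Num.conj (notation x^* ). *)
From HB Require Import structures.
From mathcomp Require Import all_boot all_order all_algebra.
Set Implicit Arguments. Unset Strict Implicit. Unset Printing Implicit Defensive.
Import Order.TTheory GRing.Theory Num.Theory.
Local Open Scope ring_scope.

Definition adjmx (C : numClosedFieldType) (p q : nat) (A : 'M[C]_(p, q)) :
  'M[C]_(q, p) := (map_mx Num.conj A)^T.

Definition complex_hadamard (C : numClosedFieldType) (n : nat) (H : 'M[C]_n) :=
  (forall i j, `|H i j| = 1) /\ H *m adjmx H = n%:R%:M.

Lemma kron_div_lt (m n : nat) (i : 'I_(m * n)) : (i %/ n < m)%N.
Proof.
case: n i => [|n] i; first by case: i => k; rewrite muln0.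
by rewrite ltn_divLR // ltn_ord.
Qed.

Lemma kron_mod_lt (m n : nat) (i : 'I_(m * n)) : (i %% n < n)%N.
Proof.
case: n i => [|n] i; first by case: i => k; rewrite muln0.
by rewrite ltn_mod.
Qed.

(* block index and in-block index of an index of 'I_(m*n) (0-based):
   i = (kdiv i) * n + (kmod i) *)
Definition kdiv (m n : nat) (i : 'I_(m * n)) : 'I_m := Ordinal (kron_div_lt i).
Definition kmod (m n : nat) (i : 'I_(m * n)) : 'I_n := Ordinal (kron_mod_lt i).

Definition kron (R : pzRingType) (m n : nat) (A : 'M[R]_m) (B : 'M[R]_n) :
  'M[R]_(m * n) :=
  \matrix_(i, j) (A (kdiv i) (kdiv j) * B (kmod i) (kmod j)).

Definition rowsR1 (m n : nat) : {set 'I_(m * n)} := [set r : 'I_(m * n) | (r < n)%N].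
Definition rowsR (m n : nat) : {set 'I_(m * n)} := ~: rowsR1 m n.
(* C_i (0-based i < n): the columns i, n+i, ..., (m-1)n+i *)
Definition colsC (m n : nat) (i : 'I_n) : {set 'I_(m * n)} :=
  [set c : 'I_(m * n) | (c %% n == i)%N].

Definition switch (C : numClosedFieldType) (m n : nat) (H : 'M[C]_(m * n))
  (i : 'I_n) (a : C) : 'M[C]_(m * n) :=
  \matrix_(r, c) (if (r \in rowsR1 m n) && (c \in colsC m i)
                  then a * H r c else H r c).

(* Main.v *)
Require Import Defs.
From HB Require Import structures.
From mathcomp Require Import all_boot all_order all_algebra.
From mathcomp Require Import ring.
Import Order.TTheory GRing.Theory Num.Theory.
Local Open Scope ring_scope.
Set Implicit Arguments. Unset Strict Implicit.

Section K.
Variables (m n : nat).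

Lemma kidx_lt (k : 'I_m) (l : 'I_n) : (k * n + l < m * n)%N.
Proof.
case: k l => k /= hk [l /= hl].
have: (k * n + l < k.+1 * n)%N by rewrite mulSn [(n + _)%N]addnC ltn_add2l.
move=> h; apply: (leq_trans h); by rewrite leq_mul2r hk orbT.
Qed.

Definition kidx (k : 'I_m) (l : 'I_n) : 'I_(m * n) := Ordinal (kidx_lt k l).

Lemma kdiv_kidx k l : kdiv (kidx k l) = k.
Proof.
apply: val_inj => /=; case: l => l /= hl.
by rewrite divnMDl ?divn_small ?addn0 //; case: (n) hl.
Qed.

Lemma kmod_kidx k l : kmod (kidx k l) = l.
Proof.
apply: val_inj => /=; case: l => l /= hl.
by rewrite modnMDl modn_small.
Qed.

Lemma kidxK (c : 'I_(m * n)) : kidx (kdiv c) (kmod c) = c.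
Proof. by apply: val_inj => /=; rewrite -divn_eq. Qed.

Lemma sum_kidx (R : nmodType) (F : 'I_(m * n) -> R) :
  \sum_c F c = \sum_(k < m) \sum_(l < n) F (kidx k l).
Proof.
rewrite pair_bigA /=.
rewrite (reindex (fun p : 'I_m * 'I_n => kidx p.1 p.2)) //=.
exists (fun c => (kdiv c, kmod c)) => [[k l] _|c _] /=.
  by rewrite kdiv_kidx kmod_kidx.
by rewrite kidxK.
Qed.
End K.

Lemma adjE (C : numClosedFieldType) p q (A : 'M[C]_(p, q)) i j :
  adjmx A i j = (A j i)^*.
Proof. by rewrite /adjmx !mxE. Qed.

Lemma had_rows (C : numClosedFieldType) n (A : 'M[C]_n) : complex_hadamard A ->
  forall r s, \sum_k A r k * (A s k)^* = (r == s)%:R * n%:R.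
Proof.
move=> [_ hA] r s; have := congr1 (fun M : 'M[C]_n => M r s) hA.
rewrite !mxE mulr_natl => <-; apply: eq_bigr => k _; by rewrite adjE.
Qed.

Lemma had_cols (C : numClosedFieldType) n (A : 'M[C]_n) : complex_hadamard A ->
  forall i j, \sum_k A k i * (A k j)^* = (i == j)%:R * n%:R.
Proof.
move=> [_ hA] i j.
have n0 : (n%:R : C) != 0.
  by rewrite pnatr_eq0; case: (n) i => [[]|].
have h1 : A *m (n%:R^-1 *: adjmx A) = 1%:M.
  by rewrite -scalemxAr hA scale_scalar_mx mulVf.
have h2 := mulmx1C h1.
have := congr1 (fun M : 'M[C]_n => n%:R * M j i) h2.
rewrite -scalemxAl !mxE mulrA mulfV // mul1r.
rewrite (eq_bigr (fun k => A k i * (A k j)^*)).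
  by move=> ->; rewrite [(j == i)]eq_sym mulrC.
by move=> k _; rewrite adjE mulrC.
Qed.

Lemma in_colsC m n (i : 'I_n) (c : 'I_(m * n)) : (c \in colsC m i) = (kmod c == i).
Proof. by rewrite inE. Qed.

Lemma in_rowsR1 m n (c : 'I_(m * n)) : (c \in rowsR1 m n) = (c < n)%N.
Proof. by rewrite inE. Qed.

Lemma kron_sum (C : numClosedFieldType) m n (A : 'M[C]_m) (B : 'M[C]_n) r s :
  \sum_c kron A B r c * (kron A B s c)^* =
  (\sum_k A (kdiv r) k * (A (kdiv s) k)^*) *
  (\sum_l B (kmod r) l * (B (kmod s) l)^*).
Proof.
rewrite sum_kidx mulr_suml; apply: eq_bigr => k _; rewrite mulr_sumr.
apply: eq_bigr => l _; rewrite !mxE !kdiv_kidx !kmod_kidx rmorphM /=.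
by rewrite mulrACA.
Qed.

Lemma kron_had (C : numClosedFieldType) m n (A : 'M[C]_m) (B : 'M[C]_n) :
  complex_hadamard A -> complex_hadamard B -> complex_hadamard (kron A B).
Proof.
move=> hA hB; split.
  by move=> i j; rewrite mxE normrM hA.1 hB.1 mulr1.
apply/matrixP => r s; rewrite !mxE.
rewrite (eq_bigr (fun c => kron A B r c * (kron A B s c)^*)); last first.
  by move=> c _; rewrite adjE.
rewrite kron_sum (had_rows hA) (had_rows hB) natrM.
rewrite mulrACA -natrM.
have -> : (r == s) = (kdiv r == kdiv s) && (kmod r == kmod s).
  apply/eqP/andP => [->|[/eqP e1 /eqP e2]]; first by rewrite !eqxx.
  by rewrite -[r]kidxK -[s]kidxK e1 e2.
by case: (kdiv r == kdiv s); case: (kmod r == kmod s); rewrite /= ?mulr1 ?mul1r ?mul0r ?mulr0.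
Qed.

Lemma sum_colsC m n (i : 'I_n) (R : nmodType) (F : 'I_(m * n) -> R) :
  \sum_(c in colsC m i) F c = \sum_(k < m) F (kidx k i).
Proof.
rewrite big_mkcond sum_kidx; apply: eq_bigr => k _.
rewrite (bigD1 i) //= in_colsC kmod_kidx eqxx big1 ?addr0 // => l hl.
by rewrite in_colsC kmod_kidx (negbTE hl).
Qed.

Lemma sum_rowsR1 m n (hm : (0 < m)%N) (R : nmodType) (F : 'I_(m * n) -> R) :
  \sum_(r in rowsR1 m n) F r = \sum_(l < n) F (kidx (Ordinal hm) l).
Proof.
rewrite big_mkcond sum_kidx (bigD1 (Ordinal hm)) //= [X in _ + X]big1 ?addr0.
  by apply: eq_bigr => l _; rewrite in_rowsR1 /= mul0n add0n ltn_ord.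
move=> k hk; apply: big1 => l _; rewrite in_rowsR1 /=.
case: ifP => // h; exfalso; move: hk h.
case: k => [[|k] hk] //= _; rewrite mulSn -addnA.
by rewrite ltnNge leq_addr.
Qed.

Lemma R1_div m n (r : 'I_(m * n)) : (0 < n)%N ->
  (r \in rowsR1 m n) = (val (kdiv r) == 0)%N.
Proof.
move=> hn; rewrite in_rowsR1 /=; apply/idP/eqP => [h|h]; first exact: divn_small.
by rewrite [val r](divn_eq r n) h mul0n add0n ltn_mod.
Qed.


Theorem corollary6p5 (C : numClosedFieldType) (m n : nat)
  (Hm : 'M[C]_m) (Hn : 'M[C]_n) :
  (0 < m)%N -> (0 < n)%N ->
  complex_hadamard Hm -> complex_hadamard Hn ->
  let H := kron Hm Hn in
  [/\ partition [set colsC m i | i : 'I_n] [set: 'I_(m * n)],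
      (forall i j : 'I_n, i != j -> colsC m i != colsC m j),
      (forall i : 'I_n, #|colsC m i| = m),
      (rowsR m n :|: rowsR1 m n = [set: 'I_(m * n)] /\
        rowsR m n :&: rowsR1 m n = set0) &
      ((forall i j : 'I_n, i != j ->
         forall c c', c \in colsC m i -> c' \in colsC m j ->
         \sum_(r in rowsR1 m n) H r c * (H r c')^* = 0) /\
      (forall (i : 'I_n) (a : C), `|a| = 1 ->
         complex_hadamard (switch H i a)))].
Proof.
move=> hm hn hHm hHn H.
pose o := Ordinal hm.
have inC : forall i : 'I_n, kidx o i \in colsC m i.
  by move=> i; rewrite in_colsC kmod_kidx.
have ne0 : forall i : 'I_n, colsC m i != set0.
  by move=> i; apply/set0Pn; exists (kidx o i).
split.
- apply/and3P; split.
  + rewrite cover_imset; apply/eqP/setP => c; rewrite inE.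
    apply/bigcupP; exists (kmod c) => //; by rewrite in_colsC.
  + have [] := @trivIimset _ _ predT (fun i : 'I_n => colsC m i) => //.
      move=> i j _ _ nji; rewrite disjoint_subset; apply/subsetP => c.
      rewrite !in_colsC inE in_colsC => /eqP ->; by rewrite eq_sym.
    apply/negP => /imsetP [i _ e]; by move: (ne0 i); rewrite -e eqxx.
  + apply/negP => /imsetP [i _ e]; by move: (ne0 i); rewrite -e eqxx.
- move=> i j nij; apply/eqP => e; move: (inC i); rewrite e in_colsC kmod_kidx.
  by rewrite (negbTE nij).
- move=> i; have -> : colsC m i = [set kidx k i | k : 'I_m].
    apply/setP => c; rewrite in_colsC; apply/eqP/imsetP => [<-|[k _ ->]].
      by exists (kdiv c) => //; rewrite kidxK.
    by rewrite kmod_kidx.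
  rewrite card_imset ?card_ord // => k1 k2 /(congr1 (@kdiv m n)).
  by rewrite !kdiv_kidx.
- by rewrite /rowsR setUC setUCr setIC setICr.
split.
- move=> i j nij c c' hc hc'; rewrite sum_rowsR1.
  transitivity ((Hm o (kdiv c) * (Hm o (kdiv c'))^*) *
     \sum_l Hn l (kmod c) * (Hn l (kmod c'))^*).
    rewrite mulr_sumr; apply: eq_bigr => l _.
    by rewrite !mxE !kdiv_kidx !kmod_kidx rmorphM /= mulrACA.
  move: hc hc'; rewrite !in_colsC => /eqP -> /eqP ->.
  by rewrite (had_cols hHn) (negbTE nij) mul0r mulr0.
move=> i a ha.
have hH := kron_had hHm hHn.
have aa : a * a^* = 1 by rewrite -normCK ha expr1n.
split.
  move=> r c; rewrite mxE; case: ifP => _; rewrite ?normrM ?ha ?mul1r; exact: hH.1.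
apply/matrixP => r s; rewrite !mxE.
set fr := (if r \in rowsR1 m n then a else 1).
set fs := (if s \in rowsR1 m n then a else 1).
rewrite (eq_bigr (fun c => H r c * (H s c)^* + (if c \in colsC m i then
   (fr * fs^* - 1) * (H r c * (H s c)^*) else 0))); last first.
  move=> c _; rewrite adjE !mxE /fr /fs.
  case: (r \in rowsR1 m n); case: (s \in rowsR1 m n);
    case: (c \in colsC m i) => /=; rewrite ?rmorphM ?rmorph1 /=; ring.
rewrite big_split /= -big_mkcond /= -mulr_sumr (had_rows hH).
have blk : kdiv r != kdiv s ->
    \sum_(c in colsC m i) H r c * (H s c)^* = 0.
  move=> nd; rewrite sum_colsC.
  transitivity ((Hn (kmod r) i * (Hn (kmod s) i)^*) *
     \sum_k Hm (kdiv r) k * (Hm (kdiv s) k)^*).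
    rewrite mulr_sumr; apply: eq_bigr => k _.
    by rewrite !mxE !kdiv_kidx !kmod_kidx rmorphM /= mulrACA mulrC.
  by rewrite (had_rows hHm) (negbTE nd) mul0r mulr0.
case E: ((r \in rowsR1 m n) == (s \in rowsR1 m n)).
  have -> : fr * fs^* = 1.
    rewrite /fr /fs (eqP E); case: (s \in rowsR1 m n) => //.
    by rewrite rmorph1 mulr1.
  by rewrite subrr mul0r addr0 mulrC mulr_natr.
have nrs : r != s by apply/eqP => e; move: E; rewrite e eqxx.
have nd : kdiv r != kdiv s.
  by apply/eqP => e; move: E; rewrite !R1_div // e eqxx.
rewrite (blk nd) (negbTE nrs) mul0r add0r mulr0n; exact: mulr0.
Qed.
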